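(* Consider the controlled system below. (i) For any ${\sf a}\in\mathcal{A}$ there exists $\tilde{\sf a}\in\mathcal{A}^R$ such that $X_t^R({\sf a})=X_t^R(\tilde{\sf a})$ for all $t\in\{0,\dots,T\}$ almost surely. (ii) For any $\tilde{\sf a}\in\mathcal{A}^R$ there exists ${\sf a}\in\mathcal{A}$ such that $X_t^R({\sf a})=X_t^R(\tilde{\sf a})$ for all $t\in\{0,\dots,T\}$ almost surely.
   Context: Setting: $\mathcal{T}=\{0,\dots,T\}$, $\mathcal{T}_0=\{0,\dots,T-1\}$, probability space $(\Omega,\mathcal{F},\mathbb{P})$ with filtration $\{\mathcal{F}_t\}$; $\varepsilon_1,\dots,\varepsilon_T$ independent $\mathbb{R}^q$-valued random variables ($\varepsilon_{t+1}$ being $\mathcal{F}_{t+1}$-measurable); measurable $K:\mathbb{R}^{d+p}\to\mathbb{R}^r$, $H:\mathbb{R}^{r+q}\to\mathbb{R}^d$; for each $t\in\mathcal{T}_0$ a set-valued map $x\mapsto A_t(x)\subseteq\mathbb{R}^p$ and a reward $f_t(x,a)$. For an action process ${\sf a}=\{a_t\}_{t\in\mathcal{T}_0}$ the state process $X({\sf a})$ valued in $\mathcal{X}\subseteq\mathbb{R}^d$ is $X_0$ given, $X_{t+1}=H(K(X_t,a_t),\varepsilon_{t+1})$. $\mathcal{A}$ is the set of ${\sf a}$ with $a_t$ $\mathcal{F}_t$-measurable and $a_t\in A_t(X_t({\sf a}))$ for all $t\in\mathcal{T}_0$. Truncation: $\mathcal{X}_R\subseteq\mathcal{X}$ bounded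 with interior $\mathring{\mathcal{X}}_R$, boundary $\partial\mathcal{X}_R$, compact strictly convex closure; $X_0\in\mathring{\mathcal{X}}_R$; $\mathcal{Q}$ the Euclidean nearest-point projection onto $\mathrm{cl}(\mathcal{X}_R)$; $\tilde H(k,e)=\mathcal{Q}(H(k,e))$ if $H(k,e)\notin\mathring{\mathcal{X}}_R$, else $H(k,e)$. For any adapted ${\sf a}$, $X^R({\sf a})$ is defined by $X^R_0=X_0$ and $X_{t+1}^R=X_t^R\mathbb{I}_{\{X_t^R\in\partial\mathcal{X}_R\}}+\tilde H(K(X_t^R,a_t),\varepsilon_{t+1})\mathbb{I}_{\{X_t^R\in\mathring{\mathcal{X}}_R\}}$ (equivalently $X_t^R=X_t\mathbb{I}_{\{\tau^R>t\}}+\mathcal{Q}(X_{\tau^R\wedge t})\mathbb{I}_{\{\tau^R\le t\}}$ with $\tau^R$ the first time $t$ with $X_t\notin\mathring{\mathcal{X}}_R$). $\mathcal{A}^R$ is the set of ${\sf a}$ with $a_t$ $\mathcal{F}_t$-measurable and $a_t\in A_t(X_t^R({\sf a}))$ for all $t\in\mathcal{T}_0$. Standing assumption: for each $t\in\mathcal{T}_0$ there is a measurable $a_t^*$ with $a_t^*(x)\in\arg\max_{a\in A_t(x)}f_t(x,a)$ for $x\in\partial\mathcal{X}_R$, and a measurable $\hat a_t$ with $\hat a_t(x)\in A_t(x)$ for all $x\in\mathcal{X}$. *)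

(* Defs.v *)
From HB Require Import structures.
From mathcomp Require Import all_boot all_order all_algebra.
From mathcomp Require Import all_classical all_reals all_analysis.
Set Implicit Arguments. Unset Strict Implicit. Unset Printing Implicit Defensive.
Import Order.TTheory GRing.Theory Num.Theory.
Import numFieldNormedType.Exports.
Local Open Scope classical_set_scope.
Local Open Scope ring_scope.

Definition borel_rV (R : realType) (n : nat) : set (set 'rV[R]_n) :=
  <<s [set A | open A] >>.

Definition meas_into (T : Type) (R : realType) (n : nat)
  (G : set (set T)) (f : T -> 'rV[R]_n) : Prop :=
  forall B, borel_rV B -> G (f @^-1` B).

Definition borel_fun (R : realType) (m n : nat) (f : 'rV[R]_m -> 'rV[R]_n) :=
  meas_into (@borel_rV R m) f.

Definition edist2 (R : realType) (n : nat) (x y : 'rV[R]_n) : R :=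
  \sum_(i < n) (x ord0 i - y ord0 i) ^+ 2.

Definition nearest_proj (R : realType) (n : nat) (C : set 'rV[R]_n)
  (Q : 'rV[R]_n -> 'rV[R]_n) : Prop :=
  forall x, C (Q x) /\ forall y, C y -> edist2 x (Q x) <= edist2 x y.

Definition strictly_convex (R : realType) (n : nat) (C : set 'rV[R]_n) : Prop :=
  forall x y (l : R), C x -> C y -> x != y -> 0 < l < 1 ->
    (interior C) (l *: x + (1 - l) *: y).

Definition boundary (R : realType) (n : nat) (S : set 'rV[R]_n) : set 'rV[R]_n :=
  closure S `\` interior S.

Definition filtration (d : measure_display) (Om : measurableType d)
  (F : nat -> set (set Om)) : Prop :=
  (forall t, sigma_algebra setT (F t)) /\
  (forall t, F t `<=` measurable) /\
  (forall s t, (s <= t)%N -> F s `<=` F t).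

Definition indep_noise (d : measure_display) (Om : measurableType d)
  (R : realType) (P : probability Om R) (q T : nat)
  (eps : nat -> Om -> 'rV[R]_q) : Prop :=
  forall B : nat -> set 'rV[R]_q, (forall t, borel_rV (B t)) ->
    P (\big[setI/setT]_(1 <= t < T.+1) (eps t @^-1` B t)) =
    (\prod_(1 <= t < T.+1) P (eps t @^-1` B t))%E.

Definition is_argmax (R : realType) (p : nat) (A : set 'rV[R]_p)
  (g : 'rV[R]_p -> R) (a : 'rV[R]_p) : Prop :=
  A a /\ forall b, A b -> g b <= g a.

Section Dynamics.
Variables (Om : Type) (R : realType) (d p r q : nat).
Variables (K : 'rV[R]_(d + p) -> 'rV[R]_r) (H : 'rV[R]_(r + q) -> 'rV[R]_d).
Variable (eps : nat -> Om -> 'rV[R]_q) (X0 : 'rV[R]_d).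

Fixpoint state (a : nat -> Om -> 'rV[R]_p) (t : nat) (w : Om) : 'rV[R]_d :=
  match t with
  | 0 => X0
  | t'.+1 => H (row_mx (K (row_mx (state a t' w) (a t' w))) (eps t'.+1 w))
  end.

Variables (XR : set 'rV[R]_d) (Q : 'rV[R]_d -> 'rV[R]_d).

Definition Htil (k : 'rV[R]_r) (e : 'rV[R]_q) : 'rV[R]_d :=
  if asbool (interior XR (H (row_mx k e))) then H (row_mx k e) else Q (H (row_mx k e)).

Fixpoint stateR (a : nat -> Om -> 'rV[R]_p) (t : nat) (w : Om) : 'rV[R]_d :=
  match t with
  | 0 => X0
  | t'.+1 =>
      let x := stateR a t' w in
      if asbool (boundary XR x) then x
      else if asbool (interior XR x) then Htil (K (row_mx x (a t' w))) (eps t'.+1 w)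
      else 0
  end.
End Dynamics.

Definition adapted (Om : Type) (R : realType) (p T : nat)
  (F : nat -> set (set Om)) (a : nat -> Om -> 'rV[R]_p) : Prop :=
  forall t, (t < T)%N -> meas_into (F t) (a t).

(* Main.v *)
Require Import Defs.
From HB Require Import structures.
From mathcomp Require Import all_boot all_order all_algebra.
From mathcomp Require Import all_classical all_reals all_analysis.
From mathcomp Require Import ring lra.
Import Order.TTheory GRing.Theory Num.Theory.
Import numFieldNormedType.Exports.
Local Open Scope classical_set_scope.
Local Open Scope ring_scope.
Section Meas.
Variable (Om : Type) (G : set (set Om)).
Hypothesis hG : sigma_algebra setT G.

Lemma saC A : G A -> G (~` A).
Proof. by case: hG => _ hC _ /hC; rewrite setTD. Qed.

Lemma sa0 : G set0. Proof. by case: hG. Qed.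
Lemma saT : G setT. Proof. by rewrite -setC0; apply: saC; exact: sa0. Qed.

Lemma saU A B : G A -> G B -> G (A `|` B).
Proof.
move=> hA hB; case: hG => _ _ hU.
have -> : A `|` B = \bigcup_k (fun k => if k == 0%N then A else if k == 1%N then B else set0) k.
  apply/seteqP; split => [x [xA|xB]|x [k _]].
  - by exists 0%N.
  - by exists 1%N.
  - by case: ifP => _; [left|case: ifP => _; [right|]].
by apply: hU => k; case: ifP => _ //; case: ifP => _ //; exact: sa0.
Qed.

Lemma saI A B : G A -> G B -> G (A `&` B).
Proof.
move=> hA hB; rewrite -[A `&` B]setCK setCI; apply: saC; apply: saU; exact: saC.
Qed.

Lemma sa_gen (R : realType) n (f : Om -> 'rV[R]_n) :
  (forall U, open U -> G (f @^-1` U)) -> meas_into G f.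
Proof.
move=> hU B hB.
suff : <<s [set A | open A] >> `<=` [set B | G (f @^-1` B)] by apply.
apply: smallest_sub; last by move=> U /hU.
case: hG => h0 hC hB'; split => /=.
- by rewrite preimage_set0.
- by move=> A hA; rewrite setTD preimage_setC -setTD; apply: hC.
- by move=> A hA; rewrite preimage_bigcup; apply: hB'.
Qed.

Lemma meas_comp (R : realType) m n (f : Om -> 'rV[R]_m) (h : 'rV[R]_m -> 'rV[R]_n) :
  meas_into G f -> borel_fun h -> meas_into G (h \o f).
Proof. by move=> hf hh B hB; rewrite comp_preimage; apply: hf; apply: hh. Qed.

Lemma meas_cst (R : realType) n (c : 'rV[R]_n) : meas_into G (fun=> c).
Proof.
move=> B _; have [Bc|nBc] := pselect (B c).
  by rewrite preimage_cst; case: ifPn => _; [exact: saT|exact: sa0].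
by rewrite preimage_cst; case: ifPn => _; [exact: saT|exact: sa0].
Qed.

Lemma meas_if (R : realType) m n (S : set 'rV[R]_m) (h : Om -> 'rV[R]_m)
   (f g : Om -> 'rV[R]_n) :
  borel_rV S -> meas_into G h -> meas_into G f -> meas_into G g ->
  meas_into G (fun w => if asbool (S (h w)) then f w else g w).
Proof.
move=> hS hh hf hg B hB.
have -> : (fun w => if asbool (S (h w)) then f w else g w) @^-1` B =
   (h @^-1` S `&` f @^-1` B) `|` (~` (h @^-1` S) `&` g @^-1` B).
  apply/seteqP; split => w /=.
    by case: (asboolP (S (h w))) => Sh Bw; [left|right].
  by case=> -[Sh Bw]; case: (asboolP (S (h w))).
apply: saU; apply: saI => //; [exact: hh|exact: hf|apply: saC; exact: hh|exact: hg].
Qed.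
End Meas.
Section Pair.
Variable (R : realType).

Lemma ball_rowP m n (a c : 'rV[R]_m) (b d : 'rV[R]_n) e :
  ball (row_mx a b) e (row_mx c d) <-> ball a e c /\ ball b e d.
Proof.
split.
  move=> [e0 H]; split; split => // i j.
    by have := H i (lshift n j); rewrite !row_mxEl.
  by have := H i (rshift m j); rewrite !row_mxEr.
move=> [[e0 H1] [_ H2]]; split => // i j.
rewrite -(splitK j); case: (fintype.split j) => k /=.
  by rewrite !row_mxEl.
by rewrite !row_mxEr.
Qed.

Lemma ball_coordP n (a c : 'rV[R]_n) e :
  ball a e c <-> 0 < e /\ forall j, `|a ord0 j - c ord0 j| < e.
Proof.
split; first by move=> [e0 H]; split => // j; exact: (H ord0 j).
by move=> [e0 H]; split => // i j; rewrite (ord1 i); exact: H.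
Qed.

Lemma rat_approx n (x : 'rV[R]_n) e : 0 < e ->
  exists c : 'rV[rat]_n, forall j, `|x ord0 j - ratr (c ord0 j)| < e.
Proof.
move=> e0.
have H : forall j : 'I_n, exists q : rat, `|x ord0 j - ratr q| < e.
  move=> j; have /rat_in_itvoo[q /itvP hq] : x ord0 j - e < x ord0 j + e.
    by rewrite ltrD2l gtrN.
  have h1 : x ord0 j - e < ratr q by rewrite hq.
  have h2 : ratr q < x ord0 j + e by rewrite hq.
  by exists q; rewrite ltr_distl; apply/andP; split; lra.
have [qf hqf] := choice H.
by exists (\row_j qf j) => j; rewrite mxE.
Qed.
End Pair.
Section Pair2.
Variable (Om : Type) (G : set (set Om)).
Hypothesis hG : sigma_algebra setT G.
Variable (R : realType).

Lemma meas_row m n (f : Om -> 'rV[R]_m) (g : Om -> 'rV[R]_n) :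
  meas_into G f -> meas_into G g -> meas_into G (fun w => row_mx (f w) (g w)).
Proof.
move=> hf hg; apply: sa_gen => // U oU.
pose cv (c : 'rV[rat]_(m + n)) : 'rV[R]_(m + n) := map_mx ratr c.
pose P (c : ('rV[rat]_(m + n) * rat)%type) : Prop :=
  0 < c.2 /\ ball (cv c.1) (ratr c.2) `<=` U.
pose S (c : ('rV[rat]_(m + n) * rat)%type) : set Om :=
  f @^-1` ball (lsubmx (cv c.1)) (ratr c.2) `&`
  g @^-1` ball (rsubmx (cv c.1)) (ratr c.2).
pose A (k : nat) : set Om := match unpickle k with
  | Some c => if pselect (P c) then S c else set0
  | None => set0 end.
have -> : (fun w => row_mx (f w) (g w)) @^-1` U = \bigcup_k A k.
  apply/seteqP; split => w /=.
    move=> Uw.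
    have : nbhs (row_mx (f w) (g w)) U by apply: open_nbhs_nbhs; split.
    move=> /nbhs_ballP [e /= e0 heU].
    have /rat_in_itvoo[rho /itvP hr] : e / 3 < e / 2.
      by rewrite ltr_pM2l // ltf_pV2 ?posrE // ltr_nat.
    have e3 : 0 < e / 3 by rewrite divr_gt0.
    have [c hc] := @rat_approx R _ (row_mx (f w) (g w)) _ e3.
    have rho0 : 0 < ratr rho :> R.
      by apply: lt_trans e3 _; rewrite hr.
    have hrho : ratr rho < e / 2 :> R by rewrite hr.
    have hrho' : e / 3 < ratr rho :> R by rewrite hr.
    have Pc : P (c, rho).
      split; first by rewrite -(ltr0q R).
      move=> y /ball_coordP [_ hy]; apply: heU.
      apply/ball_coordP; split => // j.
      have h1 := hc j; have h2 := hy j.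
      rewrite /cv mxE /= in h2.
      have h3 := ler_distD (ratr (c ord0 j)) (row_mx (f w) (g w) ord0 j) (y ord0 j).
      move: h1 h2 h3.
      move: (`|row_mx (f w) (g w) ord0 j - ratr (c ord0 j)|) => a.
      move: (`|ratr (c ord0 j) - y ord0 j|) => b.
      move: (`|row_mx (f w) (g w) ord0 j - y ord0 j|) => b'.
      lra.
    exists (pickle (c, rho)) => //; rewrite /A pickleK.
    case: pselect => [pc|//].
    have Hb : ball (cv c) (ratr rho) (row_mx (f w) (g w)).
      apply/ball_coordP; split => // j; rewrite /cv mxE distrC.
      by apply: lt_trans (hc j) _.
    rewrite -[cv c]hsubmxK in Hb.
    by move/ball_rowP : Hb => [? ?]; split.
  move=> [k _]; rewrite /A; case: unpickle => [c|//].
  case: pselect => [[c0 hcU]|//] [hfw hgw].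
  apply: hcU; rewrite -[cv c.1]hsubmxK; exact/ball_rowP.
case: hG => _ _ hU; apply: hU => k; rewrite /A.
case: unpickle => [c|]; last exact: sa0.
case: pselect => [pc|np]; last exact: sa0.
apply: saI => //; [apply: hf|apply: hg]; apply: sub_gen_smallest; exact: ball_open.
Qed.
End Pair2.
Section Proj.
Variable (R : realType) (n : nat).
Implicit Types (x y z : 'rV[R]_n).

Lemma edist2_ge0 x y : 0 <= edist2 x y.
Proof. by apply: sumr_ge0 => i _; exact: sqr_ge0. Qed.

Lemma edist2_coord x y j : (x ord0 j - y ord0 j) ^+ 2 <= edist2 x y.
Proof.
rewrite /edist2 (bigD1 j) //= lerDl; apply: sumr_ge0 => i _; exact: sqr_ge0.
Qed.

Lemma edist2_le0 x y : edist2 x y <= 0 -> x = y.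
Proof.
move=> h; apply/rowP => j.
have := edist2_coord x y j; move: (x ord0 j) (y ord0 j) => a b h2.
have h3 : (a - b) ^+ 2 <= 0 by apply: le_trans h.
have /eqP : (a - b) ^+ 2 = 0 by apply/eqP; rewrite eq_le sqr_ge0 andbT.
by rewrite sqrf_eq0 subr_eq0 => /eqP.
Qed.

Variable (C : set 'rV[R]_n) (Q : 'rV[R]_n -> 'rV[R]_n).
Hypothesis hQ : nearest_proj C Q.
Hypothesis hconv : forall x y (l : R), C x -> C y -> 0 < l < 1 ->
  C (l *: x + (1 - l) *: y).

Definition dotp x y := \sum_(i < n) x ord0 i * y ord0 i.

Lemma expand_sum (F1 F2 F3 F : 'I_n -> R) a b :
  (forall i, F i = F1 i - a * F2 i + b * F3 i) ->
  \sum_i F i = \sum_i F1 i - a * \sum_i F2 i + b * \sum_i F3 i.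
Proof.
move=> hF; rewrite !mulr_sumr -sumrB -big_split /=.
by apply: eq_bigr => i _; rewrite hF.
Qed.

Lemma var_ineq x y : C y ->
  \sum_(i < n) (x ord0 i - Q x ord0 i) * (y ord0 i - Q x ord0 i) <= 0.
Proof.
move=> Cy; set z := Q x.
set I := \sum_(i < n) _.
rewrite leNgt; apply/negP => I0.
set D := edist2 y z.
have D0 : 0 <= D by exact: edist2_ge0.
set l := I / (2 * I + D).
have den0 : 0 < 2 * I + D by lra.
have hl : l * (2 * I + D) = I by rewrite /l mulfVK // gt_eqF.
have l0 : 0 < l by rewrite /l divr_gt0 //.
have l1 : l < 1 by rewrite /l ltr_pdivrMr // mul1r; lra.
have Cw : C (l *: y + (1 - l) *: z) by apply: hconv => //; [exact: (hQ x).1|lra].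
have := (hQ x).2 _ Cw.
rewrite [edist2 x (_ + _)](@expand_sum
   (fun i => (x ord0 i - z ord0 i) ^+ 2)
   (fun i => (x ord0 i - z ord0 i) * (y ord0 i - z ord0 i))
   (fun i => (y ord0 i - z ord0 i) ^+ 2) _ (2 * l) (l ^+ 2)); last first.
  by move=> i; rewrite !mxE; ring.
rewrite -/(edist2 x z) -/I -/(edist2 y z) -/D => h.
nra.
Qed.

Lemma proj_nonexp x1 x2 : edist2 (Q x1) (Q x2) <= edist2 x1 x2.
Proof.
have v1 := @var_ineq x1 (Q x2) (hQ x2).1.
have v2 := @var_ineq x2 (Q x1) (hQ x1).1.
rewrite -subr_le0.
apply: le_trans (_ : 2 * (\sum_(i < n) (x1 ord0 i - Q x1 ord0 i) * (Q x2 ord0 i - Q x1 ord0 i)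
   + \sum_(i < n) (x2 ord0 i - Q x2 ord0 i) * (Q x1 ord0 i - Q x2 ord0 i)) <= 0); last by lra.
rewrite /edist2 -sumrB -big_split mulr_sumr; apply: ler_sum => i _.
move: (x1 ord0 i) (x2 ord0 i) (Q x1 ord0 i) (Q x2 ord0 i) => a b c d.
rewrite /=. have := sqr_ge0 ((a - b) - (c - d)); nra.
Qed.

Lemma proj_cont : continuous Q.
Proof.
apply/continuousP => U oU; rewrite openE => x /= Ux.
have : nbhs (Q x) U by apply: open_nbhs_nbhs; split.
move=> /nbhs_ballP [e /= e0 heU].
apply/nbhs_ballP; exists (e / (n%:R + 1)) => /=; first by rewrite divr_gt0 // ltr_wpDl.
move=> y /ball_coordP [d0 hy]; apply: heU; apply/ball_coordP; split => // j.
set d := e / (n%:R + 1) in d0 hy.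
have hd : d * (n%:R + 1) = e by rewrite /d mulfVK // gt_eqF // ltr_wpDl.
have N0 : 0 <= n%:R :> R by [].
have h1 : edist2 x y <= d ^+ 2 * n%:R.
  have -> : d ^+ 2 * n%:R = \sum_(i < n) d ^+ 2 by rewrite sumr_const card_ord mulr_natr.
  apply: ler_sum => i _; have := hy i; rewrite ltr_norml.
  move: (x ord0 i) (y ord0 i) => a b /andP[h h']; nra.
have h2 := proj_nonexp x y.
have h3 := edist2_coord (Q x) (Q y) j.
move: (Q x ord0 j - Q y ord0 j) h3 => a h3.
rewrite ltr_norml; apply/andP; split; nra.
Qed.
End Proj.
Section Trunc.
Variable (R : realType) (n : nat).
Variable (XR : set 'rV[R]_n) (Q : 'rV[R]_n -> 'rV[R]_n).
Hypothesis hQ : nearest_proj (closure XR) Q.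

Lemma borel_sa : sigma_algebra setT (@borel_rV R n).
Proof. exact: smallest_sigma_algebra. Qed.

Lemma borel_open (U : set 'rV[R]_n) : open U -> borel_rV U.
Proof. by move=> oU; apply: sub_sigma_algebra. Qed.

Lemma borel_interior : borel_rV (interior XR).
Proof. apply: borel_open; exact: open_interior. Qed.

Lemma borel_boundary : borel_rV (boundary XR).
Proof.
rewrite /boundary setDE; apply: (@saI _ _ borel_sa).
  rewrite -[closure XR]setCK; apply: (@saC _ _ borel_sa); apply: borel_open.
  exact: closed_openC (@closed_closure _ XR).
apply: (@saC _ _ borel_sa); exact: borel_interior.
Qed.

Lemma Q_fix y : interior XR (Q y) -> Q y = y.
Proof.
set z := Q y => /nbhs_ballP [e /= e0 heX].
set E := edist2 y z.
have E0 : 0 <= E by exact: edist2_ge0.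
set M := E + 1.
have M1 : 1 <= M by rewrite /M; lra.
set s := e / (e + M).
have hs : s * (e + M) = e by rewrite /s mulfVK // gt_eqF //; lra.
have s0 : 0 < s by rewrite /s divr_gt0 //; lra.
have s1 : s < 1 by rewrite /s ltr_pdivrMr ?mul1r; lra.
set w := z + s *: (y - z).
have Xw : XR w.
  apply: heX; apply/ball_coordP; split => // j.
  rewrite /w !mxE.
  have := @edist2_coord R n y z j; rewrite -/E.
  move: (y ord0 j) (z ord0 j) => a b h.
  have hab : - M <= a - b <= M.
    move: (a - b) h => c h.
    have := sqr_ge0 (c - 1); have := sqr_ge0 (c + 1).
    rewrite /M => h1 h2; apply/andP; split; nra.
  rewrite ltr_norml; move/andP: hab => [h1 h2].
  apply/andP; split; nra.
have := (hQ y).2 _ (subset_closure Xw).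
have -> : edist2 y w = (1 - s) ^+ 2 * E.
  rewrite /edist2 /E /edist2 mulr_sumr; apply: eq_bigr => i _.
  rewrite /w !mxE; ring.
rewrite -/z -/E => h.
have k : 0 < s * (2 - s) by apply: mulr_gt0; lra.
have k2 : E * (s * (2 - s)) <= 0 by nra.
have : E <= 0 by nra.
by move=> /edist2_le0 ->.
Qed.

Lemma closure_convex : strictly_convex (closure XR) ->
  forall x y (l : R), closure XR x -> closure XR y -> 0 < l < 1 ->
  closure XR (l *: x + (1 - l) *: y).
Proof.
move=> hsc x y l Cx Cy hl; have [->|nxy] := eqVneq x y.
  by rewrite -scalerDl addrC subrK scale1r.
exact: interior_subset (hsc x y l Cx Cy nxy hl).
Qed.

Lemma borel_Q : strictly_convex (closure XR) -> borel_fun Q.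
Proof.
move=> hsc; apply: (@sa_gen _ _ borel_sa) => U oU; apply: borel_open.
move: U oU; apply/continuousP; apply: (@proj_cont R n (closure XR) Q hQ); exact: closure_convex.
Qed.

Lemma Q_notint y : ~ interior XR y -> ~ interior XR (Q y).
Proof. by move=> ny iQ; apply: ny; rewrite -(Q_fix _ iQ). Qed.
End Trunc.
Section Dyn.
Variables (Om : Type) (R : realType) (d p r q : nat).
Variables (K : 'rV[R]_(d + p) -> 'rV[R]_r) (H : 'rV[R]_(r + q) -> 'rV[R]_d).
Variables (eps : nat -> Om -> 'rV[R]_q) (X0 : 'rV[R]_d).
Variables (XR : set 'rV[R]_d) (Q : 'rV[R]_d -> 'rV[R]_d).
Hypothesis hQ : nearest_proj (closure XR) Q.
Hypothesis hX0R : interior XR X0.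

Local Notation sR := (stateR K H eps X0 XR Q).
Local Notation st := (state K H eps X0).

Lemma sR_S a t w : sR a t.+1 w =
  if asbool (boundary XR (sR a t w)) then sR a t w
  else if asbool (interior XR (sR a t w)) then
    Htil H XR Q (K (row_mx (sR a t w) (a t w))) (eps t.+1 w)
  else 0.
Proof. by []. Qed.

Lemma sR_cl a t w : closure XR (sR a t w).
Proof.
elim: t => [|t IH]; first by apply: subset_closure; exact: interior_subset hX0R.
rewrite sR_S; case: asboolP => [[]//|nb].
case: asboolP => [ii|ni]; last by exfalso; apply: nb; split.
rewrite /Htil; case: asboolP => [/interior_subset/subset_closure //|_].
exact: (hQ _).1.
Qed.

Lemma sR_int a t w : interior XR (sR a t w) -> sR a t w = st a t w.
Proof.
elim: t => [//|t IH]; rewrite sR_S.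
case: asboolP => [[_ nb]|nb]; first by move=> /nb.
case: asboolP => [ii|ni]; last by exfalso; apply: nb; split => //; exact: sR_cl.
rewrite /Htil (IH ii); case: asboolP => [//|nih].
by move=> /(@Q_notint R d XR Q hQ _ nih).
Qed.
End Dyn.
Section Meas3.
Variables (dO : measure_display) (Om : measurableType dO) (R : realType) (d p r q T : nat).
Variable (F : nat -> set (set Om)).
Hypothesis hF : filtration F.
Variables (K : 'rV[R]_(d + p) -> 'rV[R]_r) (H : 'rV[R]_(r + q) -> 'rV[R]_d).
Variables (eps : nat -> Om -> 'rV[R]_q) (X0 : 'rV[R]_d).
Variables (XR : set 'rV[R]_d) (Q : 'rV[R]_d -> 'rV[R]_d).
Hypothesis heps : forall t, (1 <= t <= T)%N -> meas_into (F t) (eps t).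
Hypothesis hK : borel_fun K.
Hypothesis hH : borel_fun H.
Hypothesis hQb : borel_fun Q.

Local Notation sR := (stateR K H eps X0 XR Q).
Local Notation st := (state K H eps X0).

Lemma meas_mono t s m (f : Om -> 'rV[R]_m) : (s <= t)%N ->
  meas_into (F s) f -> meas_into (F t) f.
Proof. by move=> st hf B hB; apply: (hF.2.2 s t st); exact: hf. Qed.

Let hFt t := hF.1 t.

Lemma step_meas t (x : Om -> 'rV[R]_d) (a : Om -> 'rV[R]_p) : (t < T)%N ->
  meas_into (F t) x -> meas_into (F t) a ->
  meas_into (F t.+1) (fun w => H (row_mx (K (row_mx (x w) (a w))) (eps t.+1 w))).
Proof.
move=> tT hx ha.
apply: (@meas_comp _ _ _ _ _ (fun w => row_mx (K (row_mx (x w) (a w))) (eps t.+1 w)) H) => //.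
apply: meas_row => //; last by apply: heps; rewrite ltnS tT.
apply: (@meas_comp _ _ _ _ _ (fun w => row_mx (x w) (a w)) K) => //.
by apply: meas_row => //; apply: (@meas_mono _ _ _ _ (leqnSn t)).
Qed.

Lemma st_meas a : (forall t, (t < T)%N -> meas_into (F t) (a t)) ->
  forall t, (t <= T)%N -> meas_into (F t) (st a t).
Proof.
move=> ha; elim => [_|t IH tT]; first exact: meas_cst.
apply: step_meas => //; [exact: IH (ltnW tT)| exact: ha].
Qed.

Lemma sR_meas a : (forall t, (t < T)%N -> meas_into (F t) (a t)) ->
  forall t, (t <= T)%N -> meas_into (F t) (sR a t).
Proof.
move=> ha; elim => [_|t IH tT]; first exact: meas_cst.
have hx := IH (ltnW tT).
have hx' : meas_into (F t.+1) (sR a t) by apply: (@meas_mono _ _ _ _ (leqnSn t)).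
have hs := @step_meas t _ _ tT hx (ha t tT).
apply: (@meas_if _ _ (hFt t.+1) _ _ _ (boundary XR) (sR a t) (sR a t)) => //.
  exact: borel_boundary.
apply: (@meas_if _ _ (hFt t.+1) _ _ _ (interior XR) (sR a t)
  (fun w => Htil H XR Q (K (row_mx (sR a t w) (a t w))) (eps t.+1 w))) => //.
- exact: borel_interior.
- rewrite /Htil.
  apply: (@meas_if _ _ (hFt t.+1) _ _ _ (interior XR)
    (fun w => H (row_mx (K (row_mx (sR a t w) (a t w))) (eps t.+1 w)))
    (fun w => H (row_mx (K (row_mx (sR a t w) (a t w))) (eps t.+1 w)))) => //.
  + exact: borel_interior.
  + exact: (@meas_comp _ _ _ _ _ (fun w => H (row_mx (K (row_mx (sR a t w) (a t w))) (eps t.+1 w))) Q).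
- exact: meas_cst.
Qed.
End Meas3.
Section Rec.
Variables (Om : Type) (R : realType) (d p r q : nat).
Variables (K : 'rV[R]_(d + p) -> 'rV[R]_r) (H : 'rV[R]_(r + q) -> 'rV[R]_d).
Variables (eps : nat -> Om -> 'rV[R]_q) (X0 : 'rV[R]_d).
Variable (g : nat -> Om -> 'rV[R]_d -> 'rV[R]_p).
Fixpoint Yst t w := match t with
  | 0 => X0
  | t'.+1 => H (row_mx (K (row_mx (Yst t' w) (g t' w (Yst t' w)))) (eps t'.+1 w))
  end.
Lemma Yst_state t w : state K H eps X0 (fun t w => g t w (Yst t w)) t w = Yst t w.
Proof. by elim: t => //= t ->. Qed.
End Rec.

Theorem lemma2
  (R : realType) (dO : measure_display) (Om : measurableType dO)
  (P : probability Om R) (F : nat -> set (set Om))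
  (T d p r q : nat)
  (eps : nat -> Om -> 'rV[R]_q)
  (K : 'rV[R]_(d + p) -> 'rV[R]_r) (H : 'rV[R]_(r + q) -> 'rV[R]_d)
  (A : nat -> 'rV[R]_d -> set 'rV[R]_p) (f : nat -> 'rV[R]_d -> 'rV[R]_p -> R)
  (Xsp : set 'rV[R]_d) (X0 : 'rV[R]_d)
  (XR : set 'rV[R]_d) (Q : 'rV[R]_d -> 'rV[R]_d)
  (astar ahat : nat -> 'rV[R]_d -> 'rV[R]_p)
  (* probability space and filtration, noise *)
  (hF : filtration F)
  (heps_meas : forall t, (1 <= t <= T)%N -> meas_into (F t) (eps t))
  (heps_indep : indep_noise P T eps)
  (hK : borel_fun K) (hH : borel_fun H)
  (* state space *)
  (hX0 : Xsp X0)
  (hXsp : forall t w x a, (t < T)%N -> Xsp x -> A t x a ->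
            Xsp (H (row_mx (K (row_mx x a)) (eps t.+1 w))))
  (* truncation *)
  (hXR : XR `<=` Xsp) (hXRb : bounded_set XR)
  (hXRc : compact (closure XR)) (hXRsc : strictly_convex (closure XR))
  (hX0R : interior XR X0)
  (hQ : nearest_proj (closure XR) Q)
  (* standing assumption *)
  (hastar_m : forall t, (t < T)%N -> borel_fun (astar t))
  (hastar : forall t x, (t < T)%N -> boundary XR x ->
              is_argmax (A t x) (f t x) (astar t x))
  (hahat_m : forall t, (t < T)%N -> borel_fun (ahat t))
  (hahat : forall t x, (t < T)%N -> Xsp x -> A t x (ahat t x)) :
  let inA a := adapted T F a /\
      forall t w, (t < T)%N -> A t (state K H eps X0 a t w) (a t w) in
  let inAR a := adapted T F a /\
      forall t w, (t < T)%N -> A t (stateR K H eps X0 XR Q a t w) (a t w) in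
  (forall a, inA a -> exists at_, inAR at_ /\
     {ae P, forall w, forall t, (t <= T)%N ->
        stateR K H eps X0 XR Q a t w = stateR K H eps X0 XR Q at_ t w}) /\
  (forall at_, inAR at_ -> exists a, inA a /\
     {ae P, forall w, forall t, (t <= T)%N ->
        stateR K H eps X0 XR Q a t w = stateR K H eps X0 XR Q at_ t w}).
Proof.
move=> inA inAR.
have hQb : borel_fun Q by exact: (@borel_Q R d XR Q hQ hXRsc).
have hFt := hF.1.
have sRm := @sR_meas _ _ _ _ _ _ _ T F hF K H eps X0 XR Q heps_meas hK hH hQb.
split.
  move=> a [ada hA].
  pose at_ t w := if asbool (interior XR (stateR K H eps X0 XR Q a t w)) then a t w
                  else astar t (stateR K H eps X0 XR Q a t w).
  have heq : forall t w, stateR K H eps X0 XR Q at_ t w = stateR K H eps X0 XR Q a t w.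
    elim => // t IH w; rewrite !sR_S IH.
    case: asboolP => // _; case: asboolP => // ii.
    by rewrite /at_ (asboolT ii).
  exists at_; split; [split|].
  - move=> t tT; rewrite /at_.
    apply: (@meas_if _ _ (hFt t) _ _ _ (interior XR) (stateR K H eps X0 XR Q a t) (a t)).
    + exact: borel_interior.
    + exact: sRm ada t (ltnW tT).
    + exact: ada.
    + apply: (@meas_comp _ _ _ _ _ (stateR K H eps X0 XR Q a t) (astar t)).
        exact: sRm ada t (ltnW tT).
      exact: hastar_m.
  - move=> t w tT; rewrite heq /at_; case: asboolP => [ii|ni].
      rewrite {1}(@sR_int _ _ _ _ _ _ K H eps X0 XR Q hQ hX0R _ _ _ ii); exact: hA.
    have bd : boundary XR (stateR K H eps X0 XR Q a t w).
      by split => //; exact: sR_cl.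
    exact: (hastar t _ tT bd).1.
  - by apply: aeW => w t _; rewrite heq.
move=> b [adb hB].
pose g t w y := if asbool (interior XR (stateR K H eps X0 XR Q b t w)) then b t w
                else ahat t y.
pose Y := @Yst _ _ _ _ _ _ K H eps X0 g.
pose a t w := g t w (Y t w).
have hst : forall t w, state K H eps X0 a t w = Y t w by move=> t w; exact: Yst_state.
have heq : forall t w, stateR K H eps X0 XR Q a t w = stateR K H eps X0 XR Q b t w.
  elim => // t IH w; rewrite !sR_S IH.
  case: asboolP => // _; case: asboolP => // ii.
  by rewrite /a /g (asboolT ii).
have HA : forall t w, (t < T)%N -> Xsp (state K H eps X0 a t w) ->
    A t (state K H eps X0 a t w) (a t w).
  move=> t w tT hX; rewrite {2}/a /g; case: asboolP => [ii|ni].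
    have ii' : interior XR (stateR K H eps X0 XR Q a t w) by rewrite heq.
    rewrite -(@sR_int _ _ _ _ _ _ K H eps X0 XR Q hQ hX0R _ _ _ ii') heq; exact: hB.
  by rewrite -hst; apply: hahat.
have HX : forall t w, (t <= T)%N -> Xsp (state K H eps X0 a t w).
  move=> + w; elim => // t IH tT.
  have hX := IH (ltnW tT).
  exact: hXsp tT hX (HA t w tT hX).
have gm : forall t, (t < T)%N -> meas_into (F t) (Y t) ->
    meas_into (F t) (fun w => g t w (Y t w)).
  move=> t tT hY; rewrite /g.
  apply: (@meas_if _ _ (hFt t) _ _ _ (interior XR) (stateR K H eps X0 XR Q b t) (b t)).
  + exact: borel_interior.
  + exact: sRm adb t (ltnW tT).
  + exact: adb.
  + apply: (@meas_comp _ _ _ _ _ (Y t) (ahat t)) => //; exact: hahat_m.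
have Ym : forall t, (t <= T)%N -> meas_into (F t) (Y t).
  elim => [_|t IH tT]; first exact: meas_cst.
  have hY := IH (ltnW tT).
  exact: (@step_meas _ _ _ _ _ _ _ T F hF K H eps heps_meas hK hH t (Y t)
     (fun w => g t w (Y t w)) tT hY (gm t tT hY)).
exists a; split; [split|].
- move=> t tT; exact: gm t tT (Ym t (ltnW tT)).
- move=> t w tT; apply: HA => //; exact: HX (ltnW tT).
- by apply: aeW => w t _; rewrite heq.
Qed.
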